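(* Let $n\ge 1$ and $0\le k\le n$, and let $L_n$ denote the number of Latin squares of order $n$. The number of preference profiles for $n$ men and $n$ women in which both the men's preferences and the women's preferences form Latin squares and there are exactly $k$ pairs of soulmates is \[\frac{L_n^2}{n!} \binom{n}{k} \sum_{i=0}^{n-k} (-1)^i \frac{(n-k)!}{i!}.\]
   Context: A preference profile for $n$ (labeled) men and $n$ (labeled) women consists of, for each man, a strict ranking of the women (bijection to $\{1,\dots,n\}$, 1 = favorite), and for each woman, a strict ranking of the men. The men's preferences form a Latin square if the $n\times n$ matrix whose $i$-th row lists the women in man $i$'s order of preference is a Latin square, i.e. for each rank $r$ the women ranked $r$-th by the different men are distinct; similarly for the women's preferences. A man and a woman are soulmates if each ranks the other first. *)

(* Defs.v *)
From mathcomp Require Import all_boot all_order all_algebra all_fingroup.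
Set Implicit Arguments. Unset Strict Implicit. Unset Printing Implicit Defensive.

(* Ranks are 0-indexed: rank 0 (in 'I_n) = rank 1 of the paper = favorite. *)

Definition latin_square n (M : 'M['I_n]_n) : bool :=
  [forall i, forall j1, forall j2, (M i j1 == M i j2) ==> (j1 == j2)] &&
  [forall j, forall i1, forall i2, (M i1 j == M i2 j) ==> (i1 == i2)].

Definition latin_count n : nat := #|[set M : 'M['I_n]_n | latin_square M]|.

(* A side's preferences: for each person p, a bijection
   (ranking) from the other side to ranks; (P p) x = rank of x for p. *)
Definition prefs n := {ffun 'I_n -> {perm 'I_n}}.

(* The matrix whose i-th row lists the other side in person i's order:
   entry (i, r) = the person ranked r by i. *)
Definition pref_matrix n (P : prefs n) : 'M['I_n]_n :=
  \matrix_(i, r) ((P i)^-1)%g r.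

Definition latin_prefs n (P : prefs n) : bool := latin_square (pref_matrix P).

Definition soulmates n (Men Women : prefs n) (m w : 'I_n) : bool :=
  (nat_of_ord (Men m w) == 0%N) && (nat_of_ord (Women w m) == 0%N).

Definition num_soulmate_pairs n (Men Women : prefs n) : nat :=
  #|[set mw : 'I_n * 'I_n | soulmates Men Women mw.1 mw.2]|.

Definition num_latin_profiles n k : nat :=
  #|[set MW : prefs n * prefs n |
      [&& latin_prefs MW.1, latin_prefs MW.2 &
          num_soulmate_pairs MW.1 MW.2 == k]]|.

(* Main.v *)
Require Import Defs.
From mathcomp Require Import all_boot all_order all_algebra all_fingroup.
From mathcomp Require Import ring lra.
Import GRing.Theory Num.Theory.
Set Implicit Arguments. Unset Strict Implicit. Unset Printing Implicit Defensive.
Local Open Scope ring_scope.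

Lemma factr_neq0 m : (m`!)%:R != 0 :> rat.
Proof. by rewrite pnatr_eq0 -lt0n fact_gt0. Qed.

Lemma binE a b : (b <= a)%N ->
  ('C(a, b))%:R = (a`!)%:R / ((b`!)%:R * ((a - b)`!)%:R) :> rat.
Proof.
move=> h; rewrite -(bin_fact h) natrM natrM mulfK //.
by rewrite mulf_neq0 // factr_neq0.
Qed.

Lemma sum_subsets (T : finType) (A : {set T}) (g : nat -> rat) :
  \sum_(U : {set T} | U \subset A) g #|U| =
  \sum_(u < #|A|.+1) ('C(#|A|, u))%:R * g u.
Proof.
rewrite (partition_big (fun U : {set T} => (inord #|U| : 'I_#|A|.+1)) predT) //=.
apply: eq_bigr => u _.
have -> : \sum_(U : {set T} | (U \subset A) && (inord #|U| == u)) g #|U|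
   = \sum_(U in [set U : {set T} | U \subset A & #|U| == u]) g u.
  apply: eq_big => U.
    rewrite inE; case sUA: (U \subset A) => //=.
    have hU : (#|U| < #|A|.+1)%N by rewrite ltnS subset_leq_card.
    apply/eqP/eqP => [<-|->]; first by rewrite inordK.
    exact: inord_val.
  case/andP=> sUA /eqP <-.
  have hU : (#|U| < #|A|.+1)%N by rewrite ltnS subset_leq_card.
  by rewrite inordK.
by rewrite sumr_const cards_draws mulr_natl.
Qed.

Lemma alt_binom m : \sum_(j < m.+1) ('C(m, j))%:R * (-1) ^+ j = (m == 0)%:R :> rat.
Proof.
have := exprDn (1 : rat) (-1) m.
rewrite subrr expr0n => ->; apply: eq_bigr => j _.
by rewrite expr1n mul1r mulr_natl.
Qed.

Lemma incl_excl_id f k :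
  \sum_(u < f.+1) ('C(f, u))%:R * ((-1) ^+ (u - k) * ('C(u, k))%:R) = (f == k)%:R :> rat.
Proof.
case: (ltnP f k) => hfk.
  rewrite (ltn_eqF hfk) big1 // => u _.
  have -> : ('C(u, k) = 0)%N by exact/bin_small/(leq_trans (ltn_ord u) hfk).
  by rewrite mulr0n !mulr0.
rewrite -(subnKC hfk); set m := (f - k)%N.
have -> : ((k + m)%N == k) = (m == 0%N) by rewrite -{2}[k]addn0 eqn_add2l.
rewrite -(big_mkord xpredT (fun u => ('C(k + m, u))%:R * ((-1) ^+ (u - k) * ('C(u, k))%:R) : rat)).
rewrite (@big_cat_nat _ _ _ k) //=; last by apply: leqW; rewrite leq_addr.
rewrite big_nat_cond big1 ?add0r; last first.
  move=> u /andP[/andP[_ hu] _].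
  by rewrite (bin_small hu) mulr0n !mulr0.
have -> : (m == 0%N)%:R = ('C(k + m, k))%:R * (m == 0%N)%:R :> rat.
  by case: (m) => [|?]; rewrite ?addn0 ?binn ?mul1r ?mulr0.
rewrite -{1}[k]add0n big_addn -addnS addKn big_mkord -alt_binom mulr_sumr.
apply: eq_bigr => [[j hj]] _ /=.
have hjm : (j <= m)%N by rewrite -ltnS.
rewrite addnK (@binE _ _ (leq_addl j k)) (@binE _ _ (leq_addr m k)).
rewrite (@binE (k + m) (j + k)); last by rewrite addnC leq_add2l.
rewrite (@binE _ _ hjm) addnK addKn [(j + k)%N]addnC subnDl.
have h1 := factr_neq0 (k + m); have h2 := factr_neq0 (k + j).
have h3 := factr_neq0 k; have h4 := factr_neq0 j.
have h5 := factr_neq0 (m - j); have h6 := factr_neq0 m.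
by field; rewrite !factr_neq0.
Qed.

Lemma final_sum k m :
  \sum_(u < (k + m).+1) ('C(k + m, u))%:R *
      (((-1) ^+ (u - k) * ('C(u, k))%:R) * (((k + m) - u)`!)%:R)
  = ('C(k + m, k))%:R * \sum_(i < m.+1) (-1) ^+ i * (m`!)%:R / (i`!)%:R :> rat.
Proof.
rewrite -(big_mkord xpredT (fun u => ('C(k + m, u))%:R *
      (((-1) ^+ (u - k) * ('C(u, k))%:R) * (((k + m) - u)`!)%:R) : rat)).
rewrite (@big_cat_nat _ _ _ k) //=; last by apply: leqW; rewrite leq_addr.
rewrite big_nat_cond big1 ?add0r; last first.
  move=> u /andP[/andP[_ hu] _].
  by rewrite (bin_small hu) mulr0n !(mulr0, mul0r).
rewrite -{1}[k]add0n big_addn -addnS addKn big_mkord mulr_sumr.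
apply: eq_bigr => [[j hj]] _ /=.
have hjm : (j <= m)%N by rewrite -ltnS.
rewrite addnK (@binE _ _ (leq_addl j k)) (@binE _ _ (leq_addr m k)).
rewrite (@binE (k + m) (j + k)); last by rewrite addnC leq_add2l.
rewrite addnK addKn [(j + k)%N]addnC subnDl.
have h1 := factr_neq0 (k + m); have h2 := factr_neq0 (k + j).
have h3 := factr_neq0 k; have h4 := factr_neq0 j.
have h5 := factr_neq0 (m - j); have h6 := factr_neq0 m.
by field; rewrite !factr_neq0.
Qed.

Lemma final_sum' n k : (k <= n)%N ->
  \sum_(u < n.+1) ('C(n, u))%:R *
      (((-1) ^+ (u - k) * ('C(u, k))%:R) * ((n - u)`!)%:R)
  = ('C(n, k))%:R * \sum_(i < (n - k).+1) (-1) ^+ i * ((n - k)`!)%:R / (i`!)%:R :> rat.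
Proof.
move=> hk; have [m ->] : exists m, n = (k + m)%N by exists (n - k)%N; rewrite subnKC.
rewrite addKn; exact: final_sum.
Qed.

Lemma fixcount n k : (k <= n)%N ->
  (#|[set r : {perm 'I_n} | #|[set x | r x == x]| == k]|)%:R =
  ('C(n, k))%:R * \sum_(i < (n - k).+1) (-1) ^+ i * ((n - k)`!)%:R / (i`!)%:R :> rat.
Proof.
move=> hk.
pose h u := ((-1) ^+ (u - k) * ('C(u, k))%:R : rat).
have -> : (#|[set r : {perm 'I_n} | #|[set x | r x == x]| == k]|)%:R =
   \sum_(r : {perm 'I_n}) \sum_(U : {set 'I_n} | U \subset [set x | r x == x]) h #|U|.
  rewrite -sumr_const big_mkcond /=; apply: eq_bigr => r _.
  rewrite sum_subsets incl_excl_id inE; by case: eqP.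
rewrite (exchange_big_dep xpredT) //=.
have -> : \sum_(U : {set 'I_n})
     \sum_(r : {perm 'I_n} | true && (U \subset [set x | r x == x])) h #|U|
   = \sum_(U : {set 'I_n} | U \subset [set: 'I_n]) h #|U| * ((n - #|U|)`!)%:R.
  apply: eq_big => [U|U _]; first by rewrite subsetT.
  have -> : \sum_(r : {perm 'I_n} | true && (U \subset [set x | r x == x])) h #|U|
     = \sum_(r in perm_on (~: U)) h #|U|.
    apply: eq_bigl => r /=; rewrite unfold_in /perm_on /=.
    apply/subsetP/subsetP => H x.
      rewrite !inE => rx; apply/negP => xU.
      by have := H x xU; rewrite inE (negbTE rx).
    move=> xU; rewrite inE; apply/negPn/negP => rx.
    by have := H x rx; rewrite inE xU.
  rewrite sumr_const card_perm mulr_natr.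
  have hc := cardsC U; rewrite card_ord in hc.
  have -> : (n - #|U|)%N = #|~: U| by rewrite -{1}hc addKn.
  by [].
rewrite (@sum_subsets _ [set: 'I_n] (fun u => h u * ((n - u)`!)%:R)) cardsT card_ord.
by rewrite -final_sum'.
Qed.

Lemma latinP n (P : prefs n) :
  reflect (forall j i1 i2, ((P i1)^-1)%g j = ((P i2)^-1)%g j -> i1 = i2)
          (latin_prefs P).
Proof.
apply: (iffP andP) => [[_ /forallP H] j i1 i2 e | H].
  have := H j; move/forallP/(_ i1)/forallP/(_ i2).
  by rewrite /pref_matrix !mxE e eqxx /= => /eqP.
split; apply/forallP => i; apply/forallP => j1; apply/forallP => j2;
  apply/implyP; rewrite /pref_matrix !mxE => /eqP e; apply/eqP.
  exact: (perm_inj e).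
exact: H _ _ _ e.
Qed.

Lemma card_latin_prefs n :
  #|[set P : prefs n | latin_prefs P]| = latin_count n.
Proof.
rewrite /latin_count.
have inj : {in [set P : prefs n | latin_prefs P] &, injective (@pref_matrix n)}.
  move=> P Q _ _ e; apply/ffunP => i; apply: invg_inj; apply/permP => r.
  by have := congr1 (fun M : 'M['I_n]_n => M i r) e; rewrite /pref_matrix !mxE.
rewrite -(card_in_imset inj); apply: eq_card => M; rewrite [in RHS]inE.
apply/imsetP/idP => [[P]|HM].
  by rewrite inE => HP ->.
have H : forall i, injective (fun r => M i r).
  move=> i r1 r2 e; case/andP: HM => /forallP/(_ i)/forallP/(_ r1)/forallP/(_ r2).
  by rewrite e eqxx => /eqP.
have E : pref_matrix [ffun i => ((perm (H i))^-1)%g] = M.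
  by apply/matrixP => i r; rewrite /pref_matrix mxE ffunE invgK permE.
by exists [ffun i => ((perm (H i))^-1)%g]; rewrite ?inE /latin_prefs E.
Qed.

Local Close Scope ring_scope.
Local Open Scope nat_scope.

Definition hascol n (P : prefs n.+1) (s : {perm 'I_n.+1}) : bool :=
  [forall m, ((P m)^-1)%g ord0 == s m].

Definition cnt n (s : {perm 'I_n.+1}) : nat :=
  #|[set P : prefs n.+1 | latin_prefs P && hascol P s]|.

Definition shift n (p : {perm 'I_n}) (P : prefs n) : prefs n := [ffun m => P (p m)].

Lemma cnt_le n (s t : {perm 'I_n.+1}) : (cnt s <= cnt t)%N.
Proof.
rewrite /cnt; set pi := (t * s^-1)%g.
have inj : injective (shift pi).
  move=> P Q e; apply/ffunP => x.
  have := congr1 (fun R : prefs n.+1 => R ((pi^-1)%g x)) e.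
  by rewrite !ffunE permKV.
rewrite -(card_imset _ inj); apply: subset_leq_card; apply/subsetP => _ /imsetP[P HP ->].
rewrite inE in HP; case/andP: HP => lP /forallP hP; rewrite inE; apply/andP; split.
  apply/latinP => j i1 i2; rewrite !ffunE => e; apply: (perm_inj (s:=pi)).
  exact: (latinP _ lP) j _ _ e.
apply/forallP => m; rewrite ffunE (eqP (hP (pi m))) /pi permM permKV.
by [].
Qed.

Lemma cnt_const n (s : {perm 'I_n.+1}) : cnt s = @cnt n 1%g.
Proof. by apply/anti_leq; rewrite !cnt_le. Qed.

Lemma col_uniq n (P : prefs n.+1) s s' : hascol P s -> hascol P s' -> s = s'.
Proof.
move=> /forallP h /forallP h'; apply/permP => m.
by rewrite -(eqP (h m)) (eqP (h' m)).
Qed.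

Lemma col_ex n (P : prefs n.+1) : latin_prefs P -> exists s, hascol P s.
Proof.
move=> lP.
have inj : injective (fun m => ((P m)^-1)%g ord0) by move=> x y; exact: (latinP _ lP).
by exists (perm inj); apply/forallP => m; rewrite permE.
Qed.

Lemma cntE n (s : {perm 'I_n.+1}) :
  cnt s = \sum_(P : prefs n.+1) ((latin_prefs P && hascol P s) : nat).
Proof.
rewrite /cnt -sum1_card big_mkcond; apply: eq_bigr => P _; rewrite inE.
by case: (_ && _).
Qed.

Lemma card_latin_cnt n :
  #|[set P : prefs n.+1 | latin_prefs P]| = (n.+1`! * @cnt n 1%g)%N.
Proof.
have -> : #|[set P : prefs n.+1 | latin_prefs P]| =
   \sum_(P : prefs n.+1) \sum_(s : {perm 'I_n.+1}) ((latin_prefs P && hascol P s) : nat).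
  rewrite -sum1_card big_mkcond; apply: eq_bigr => P _; rewrite inE.
  case lP: (latin_prefs P); last by rewrite big1.
  have [s0 hs0] := col_ex lP.
  rewrite (bigD1 s0) //= big1 ?hs0 ?addn0 // => s ne.
  case h: (hascol P s) => //.
  by rewrite (col_uniq h hs0) eqxx in ne.
rewrite exchange_big /=.
rewrite (eq_bigr (fun _ => @cnt n 1%g)); last by move=> s _; rewrite -cntE cnt_const.
by rewrite sum_nat_const card_Sn.
Qed.

Lemma rank0E n (p : {perm 'I_n.+1}) w :
  (nat_of_ord (p w) == 0) = (w == (p^-1)%g ord0).
Proof.
have -> : (nat_of_ord (p w) == 0) = (p w == ord0) by [].
by apply/eqP/eqP => [<-|->]; rewrite ?permK ?permKV.
Qed.

Lemma soul_count n (P Q : prefs n.+1) s t :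
  hascol P s -> hascol Q t ->
  num_soulmate_pairs P Q = #|[set m | (s * t)%g m == m]|.
Proof.
move=> /forallP hP /forallP hQ; rewrite /num_soulmate_pairs.
have -> : [set mw : 'I_n.+1 * 'I_n.+1 | soulmates P Q mw.1 mw.2] =
    (fun m => (m, s m)) @: [set m | (s * t)%g m == m].
  apply/setP => [[m w]]; rewrite inE /soulmates /= !rank0E (eqP (hP m)) (eqP (hQ w)).
  apply/andP/imsetP => [[/eqP -> /eqP e]|[x]].
    by exists m => //; rewrite inE permM -e.
  by rewrite inE permM => /eqP e [-> ->]; rewrite e !eqxx.
by apply: card_imset => x y [].
Qed.

Lemma point n k (P Q : prefs n.+1) :
  ([&& latin_prefs P, latin_prefs Q & num_soulmate_pairs P Q == k] : nat) =
  \sum_(s : {perm 'I_n.+1}) \sum_(t : {perm 'I_n.+1})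
     ((latin_prefs P && hascol P s) * (latin_prefs Q && hascol Q t) *
      (#|[set m | (s * t)%g m == m]| == k)).
Proof.
case lP: (latin_prefs P); last by rewrite big1 // => s _; rewrite big1.
case lQ: (latin_prefs Q); last first.
  by rewrite big1 // => s _; rewrite big1 // => t _; rewrite muln0 mul0n.
have [s0 hs0] := col_ex lP; have [t0 ht0] := col_ex lQ.
rewrite (bigD1 s0) //= [X in _ + X]big1 ?addn0; last first.
  move=> s ne; apply: big1 => t _; case h: (hascol P s); last by rewrite !mul0n.
  by rewrite (col_uniq h hs0) eqxx in ne.
rewrite (bigD1 t0) //= [X in _ + X]big1 ?addn0; last first.
  move=> t ne; case h: (hascol Q t); last by rewrite muln0 mul0n.
  by rewrite (col_uniq h ht0) eqxx in ne.
by rewrite hs0 ht0 (soul_count hs0 ht0) !mul1n.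
Qed.

Lemma num_eq n k :
  num_latin_profiles n.+1 k =
  @cnt n 1%g * @cnt n 1%g *
  \sum_(s : {perm 'I_n.+1}) \sum_(t : {perm 'I_n.+1})
      (#|[set m | (s * t)%g m == m]| == k).
Proof.
rewrite /num_latin_profiles -sum1_card.
have -> : \sum_(MW in [set MW : prefs n.+1 * prefs n.+1 |
      [&& latin_prefs MW.1, latin_prefs MW.2 & num_soulmate_pairs MW.1 MW.2 == k]]) 1
   = \sum_(MW : prefs n.+1 * prefs n.+1)
      ([&& latin_prefs MW.1, latin_prefs MW.2 & num_soulmate_pairs MW.1 MW.2 == k] : nat).
  rewrite big_mkcond; apply: eq_bigr => MW _; rewrite inE.
  by case: (_ && _).
rewrite -(pair_big xpredT xpredT (fun P Q =>
  ([&& latin_prefs P, latin_prefs Q & num_soulmate_pairs P Q == k] : nat))) /=.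
under eq_bigr do under eq_bigr do rewrite point.
under eq_bigr do rewrite exchange_big /=.
under eq_bigr do under eq_bigr do rewrite exchange_big /=.
rewrite exchange_big /=.
under eq_bigr do rewrite exchange_big /=.
rewrite big_distrr; apply: eq_bigr => s _.
rewrite big_distrr; apply: eq_bigr => t _.
rewrite -{1}(cnt_const s) -(cnt_const t) !cntE big_distrl big_distrl /=.
apply: eq_bigr => P _; rewrite big_distrr big_distrl /=.
by apply: eq_bigr => Q _.
Qed.

Lemma fix_sum n k :
  \sum_(s : {perm 'I_n}) \sum_(t : {perm 'I_n})
      (#|[set m | (s * t)%g m == m]| == k) =
  n`! * #|[set r : {perm 'I_n} | #|[set x | r x == x]| == k]|.
Proof.
rewrite (eq_bigr (fun _ => #|[set r : {perm 'I_n} | #|[set x | r x == x]| == k]|)).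
  by rewrite sum_nat_const card_Sn.
move=> s _.
transitivity (\sum_(r : {perm 'I_n}) ((#|[set x | r x == x]| == k) : nat)).
  by rewrite [RHS](reindex_inj (mulgI s)).
rewrite -sum1_card [RHS]big_mkcond /=; apply: eq_bigr => r _; rewrite inE.
by case: (#|[set x | r x == x]| == k).
Qed.

Local Close Scope nat_scope.
Local Open Scope ring_scope.

Theorem mainTheorem5 (n k : nat) (hn : (1 <= n)%N) (hk : (k <= n)%N) :
  (num_latin_profiles n k)%:R =
    ((latin_count n)%:R ^+ 2 / (n`!)%:R) * ('C(n, k))%:R *
    \sum_(i < (n - k).+1) (-1) ^+ i * ((n - k)`!)%:R / (i`!)%:R :> rat.
Proof.
case: n hn hk => [//|n] _ hk.
rewrite num_eq fix_sum -card_latin_prefs card_latin_cnt.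
rewrite -mulrA -(fixcount hk).
move: (factr_neq0 n.+1); move: ((n.+1)`!)%N => N hN.
rewrite !natrM; by field.
Qed.
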